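(* The system $\dot d_k=(1+\alpha d_k)(c_k^{(1)}-c_{k-1}^{(1)})$, $\dot c_k^{(j)}=c_k^{(j)}(d_{k+j}-d_k+\alpha c_{k+j}^{(1)}-\alpha c_{k-1}^{(1)})+(c_k^{(j+1)}-c_{k-1}^{(j+1)})$ ($1\le j\le m-1$), $\dot c_k^{(m)}=c_k^{(m)}(d_{k+m}-d_k+\alpha c_{k+m}^{(1)}-\alpha c_{k-1}^{(1)})$ is Hamiltonian with respect to the bracket $\{\cdot,\cdot\}_{2\alpha}$ with Hamilton function $H=\alpha^{-1}\sum_{k=1}^Nd_k+\sum_{k=1}^Nc_k^{(1)}$.
   Context: $N\ge2m+2$, $m\ge1$, $\alpha\neq0$ real, subscripts modulo $N$; phase space $\mathbb R^{(m+1)N}$ with coordinates $d_k,c_k^{(j)}$ ($1\le k\le N$, $1\le j\le m$); convention $c_k^{(p)}=0$ for $p>m$. The bracket $\{\cdot,\cdot\}_{2\alpha}$ is defined by: $\{d_k,d_l\}_{2\alpha}=0$; $\{d_k,c_k^{(j)}\}_{2\alpha}=-c_k^{(j)}(1+\alpha d_k)$, $\{c_k^{(j)},d_{k+j}\}_{2\alpha}=-c_k^{(j)}(1+\alpha d_{k+j})$; $\{c_k^{(i)},c_{k+i}^{(j)}\}_{2\alpha}=-c_k^{(i+j)}-\alpha c_k^{(i)}c_{k+i}^{(j)}$; for $i\le j$, $1\le\ell\le i-1$: $\{c_k^{(i)},c_{k+\ell}^{(j)}\}_{2\alpha}=-\alpha c_k^{(i)}c_{k+\ell}^{(j)}+\alpha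 c_k^{(j+\ell)}c_{k+\ell}^{(i-\ell)}$; for $i\le j$, $j-i+1\le\ell\le j-1$: $\{c_k^{(j)},c_{k+\ell}^{(i)}\}_{2\alpha}=-\alpha c_k^{(j)}c_{k+\ell}^{(i)}+\alpha c_k^{(i+\ell)}c_{k+\ell}^{(j-\ell)}$; all other coordinate brackets (up to antisymmetry) are zero. Hamiltonian system: $\dot x=\{H,x\}$ for each coordinate $x$. *)

(* Defs.v *)
From HB Require Import structures.
From mathcomp Require Import all_boot all_algebra.
From mathcomp Require Import all_classical all_reals all_analysis.
Set Implicit Arguments. Unset Strict Implicit. Unset Printing Implicit Defensive.
Import GRing.Theory Num.Theory.
Local Open Scope ring_scope.

(* Coordinates: inl k  ~ d_k,   inr (k, j) ~ c_k^{(j)}.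
   The canonical coordinates are k < N and 1 <= j <= m (see [coords]);
   all accessors reduce the lattice index k modulo N. *)
Definition Coord : Type := (nat + (nat * nat))%type.
Definition phase (R : realType) := Coord -> R.

Section Defs.
Variables (R : realType) (N m : nat) (alpha : R).

Definition dd (p : phase R) (k : nat) : R := p (inl (k %% N)%N).
(* c_k^{(j)}, indices modulo N, with the convention c^{(p)} = 0 for p > m
   (and also for p = 0, which never occurs) *)
Definition cc (p : phase R) (k j : nat) : R :=
  if (1 <= j <= m)%N then p (inr ((k %% N)%N, j)) else 0.

(* "forward" value of {c_k^{(a)}, c_l^{(b)}}_{2alpha}, where l = k + s mod N *)
Definition fwd_cc (p : phase R) (k a l b : nat) : R :=
  let s := (((l %% N) + N - (k %% N)) %% N)%N in
  (if s == a then - cc p k (a + b) - alpha * cc p k a * cc p l b else 0)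
  + (if [|| ((a <= b)%N && (1 <= s <= a - 1)%N)
          | ((b <= a)%N && (a - b + 1 <= s <= a - 1)%N)]
     then - alpha * cc p k a * cc p l b + alpha * cc p k (b + s) * cc p l (a - s)
     else 0).

Definition br_dc (p : phase R) (k l j : nat) : R :=
  (if (k %% N == l %% N)%N then - cc p l j * (1 + alpha * dd p k) else 0)
  + (if (k %% N == (l + j) %% N)%N then cc p l j * (1 + alpha * dd p k) else 0).

Definition br (a b : Coord) (p : phase R) : R :=
  match a, b with
  | inl _, inl _ => 0
  | inl k, inr (l, j) => br_dc p k l j
  | inr (l, j), inl k => - br_dc p k l j
  | inr (k, i), inr (l, j) => fwd_cc p k i l j - fwd_cc p l j k i
  end.

Definition coords : seq Coord :=
  [seq inl k | k <- iota 0 N] ++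
  [seq inr (k, j) | k <- iota 0 N, j <- iota 1 m].

Definition coordfun (x : Coord) : phase R -> R := fun p => p x.

Definition partial (a : Coord) (F : phase R -> R) (p : phase R) : R :=
  derive1 (fun t : R => F (fun b => p b + (if b == a then t else 0))) 0.

Definition pbr (F G : phase R -> R) (p : phase R) : R :=
  \sum_(a <- coords) \sum_(b <- coords)
     partial a F p * partial b G p * br a b p.

Definition Ham (p : phase R) : R :=
  alpha^-1 * (\sum_(1 <= k < N.+1) dd p k) + \sum_(1 <= k < N.+1) cc p k 1.

Definition rhs (x : Coord) (p : phase R) : R :=
  match x with
  | inl k => (1 + alpha * dd p k) * (cc p k 1 - cc p (k + N - 1) 1)
  | inr (k, j) =>
      if (j <= m - 1)%N then
        cc p k j * (dd p (k + j) - dd p k + alpha * cc p (k + j) 1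
                    - alpha * cc p (k + N - 1) 1)
        + (cc p k j.+1 - cc p (k + N - 1) j.+1)
      else
        cc p k m * (dd p (k + m) - dd p k + alpha * cc p (k + m) 1
                    - alpha * cc p (k + N - 1) 1)
  end.

End Defs.

(* Main.v *)
Require Import Defs.
From mathcomp Require Import all_boot all_algebra.
From mathcomp Require Import all_classical all_reals all_analysis.
From mathcomp Require Import zify ring lra.
Import GRing.Theory Num.Theory.

Lemma modN2 (N x : nat) : (0 < N)%N -> (x < N + N)%N ->
  (x %% N = if x < N then x else x - N)%N.
Proof.
move=> N0 h; case: ltnP => h2; first by rewrite modn_small.
by rewrite -{1}(subnK h2) modnDr modn_small //; lia.
Qed.

Lemma C2 (N k l : nat) : (0 < N)%N -> (k < N)%N -> (l < N)%N ->
  (l %% N == (k + 1) %% N) = (k == (l + N - 1) %% N).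
Proof.
move=> N0 hk hl; rewrite (modn_small hl) (@modN2 N (k + 1)) // ?(@modN2 N (l + N - 1)) //; try lia.
by do 2 case: ifP => ?; apply/eqP/eqP; lia.
Qed.

Lemma F1 (N k l : nat) : (1 < N)%N -> (k < N)%N -> (l < N)%N ->
  ((l %% N + N - k %% N) %% N == 1)%N = (k == (l + N - 1) %% N).
Proof.
move=> N0 hk hl; rewrite (modn_small hl) (modn_small hk).
rewrite (@modN2 N (l + N - k)) ?(@modN2 N (l + N - 1)) //; try lia.
by do 2 case: ifP => ?; apply/eqP/eqP; lia.
Qed.

Lemma F2 (N k l j : nat) : (1 <= j)%N -> (j < N)%N -> (k < N)%N -> (l < N)%N ->
  ((k %% N + N - l %% N) %% N == j)%N = (k == (l + j) %% N).
Proof.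
move=> hj jN hk hl; rewrite (modn_small hl) (modn_small hk).
rewrite (@modN2 N (k + N - l)) ?(@modN2 N (l + j)) //; try lia.
by do 2 case: ifP => ?; apply/eqP/eqP; lia.
Qed.

Lemma G1 (s j : nat) :
  [|| ((1 <= j)%N && (1 <= s <= 1 - 1)%N) | ((j <= 1)%N && (1 - j + 1 <= s <= 1 - 1)%N)] = false.
Proof. by apply/negP => /orP[/andP[_ /andP[h1 h2]]|/andP[h0 /andP[h1 h2]]]; lia. Qed.

Lemma G2 (s j : nat) :
  [|| ((j <= 1)%N && (1 <= s <= j - 1)%N) | ((1 <= j)%N && (j - 1 + 1 <= s <= j - 1)%N)] = false.
Proof. by apply/negP => /orP[/andP[h3 /andP[h1 h2]]|/andP[h0 /andP[h1 h2]]]; lia. Qed.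

Local Open Scope ring_scope.
Lemma partial_lin (R : realType) (a : Coord) (F : phase R -> R) p (c : R) :
  (forall t, F (fun b => p b + (if b == a then t else 0)) = F p + t * c) ->
  partial a F p = c.
Proof.
move=> h; rewrite /partial (_ : (fun t => _) = (fun t : R => F p + t * c)); last first.
  by apply: funext => t; rewrite h.
rewrite derive1E; apply: derive_val.
have := @is_deriveD R R R (cst (F p)) (fun t : R => t * c) 0 1 0 c.
move=> /(_ (is_derive_cst _ _ _)); rewrite add0r; apply.
have H1 : is_derive (0:R) (1:R) (fun t : R => t) 1 by apply: is_derive_id.
have := @is_deriveM R R (fun t : R => t) (fun _ => c) 0 1 1 0.
move=> /(_ H1 (is_derive_cst _ _ _)) hh.
have E : (0 : R) *: (0 : R) + c *: (1 : R) = c by rewrite scale0r add0r; exact: mulr1.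
by move: hh; rewrite E.
Qed.

Lemma pick (R : realType) (I : eqType) (r : seq I) (x : I) (F : I -> R) :
  x \in r -> uniq r -> (forall b, b \in r -> b != x -> F b = 0) ->
  \sum_(b <- r) F b = F x.
Proof.
move=> xr ur h; rewrite (bigD1_seq x) //= big1_seq ?addr0 // => b /andP[nb br].
exact: h.
Qed.

Lemma reindex (R : realType) (N : nat) (f : nat -> R) : (0 < N)%N ->
  \sum_(1 <= k < N.+1) f (k %% N)%N = \sum_(k <- iota 0 N) f k.
Proof.
case: N => // n _.
rewrite /index_iota subn1 [iota 1 _](_ : _ = iota 1 n ++ [:: n.+1]); last first.
  have -> : n.+2.-1 = (n + 1)%N by rewrite addn1.
  by rewrite iotaD.
rewrite big_cat big_seq1 modnn [iota 0 _]/= big_cons addrC.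
congr (_ + _); apply: eq_big_seq => k; rewrite mem_iota => /andP[_ hk].
by rewrite modn_small //; lia.
Qed.

Lemma dd_mod (R : realType) N (p : phase R) k : dd N p (k %% N)%N = dd N p k.
Proof. by rewrite /dd modn_mod. Qed.

Lemma cc_mod (R : realType) N m (p : phase R) k j : cc N m p (k %% N)%N j = cc N m p k j.
Proof. by rewrite /cc modn_mod. Qed.

Lemma Ham_shift (R : realType) N m (alpha : R) (p : phase R) a t : (1 <= m)%N ->
  Ham N m alpha (fun b => p b + (if b == a then t else 0)) =
  Ham N m alpha p + t * Ham N m alpha (fun b => if b == a then 1 else 0).
Proof.
move=> hm; rewrite /Ham /dd /cc hm /=.
have E (c : bool) : (if c then t else 0) = t * (if c then 1 else 0) by case: c; rewrite ?mulr1 ?mulr0.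
under eq_bigr do rewrite E.
under [X in _ + X = _]eq_bigr do rewrite E.
rewrite !big_split /= -!mulr_sumr; ring.
Qed.

Lemma hval_inl (R : realType) N m (alpha : R) k0 : (1 <= m)%N -> (k0 < N)%N ->
  Ham N m alpha (fun b => if b == inl k0 then 1 else 0) = alpha^-1.
Proof.
move=> hm hk; have N0 : (0 < N)%N by lia.
rewrite /Ham /dd /cc hm /=.
rewrite [X in _ + X = _]big1 ?addr0 //.
rewrite (@reindex _ _ (fun k => if inl k == inl k0 :> Coord then 1 else 0)) //.
rewrite (@pick _ _ _ k0) /= ?eqxx ?mulr1 ?mem_iota ?iota_uniq //.
by move=> b _ nb; case: eqP => // -[ebk]; rewrite ebk eqxx in nb.
Qed.

Lemma hval_inr (R : realType) N m (alpha : R) k0 j0 : (1 <= m)%N -> (k0 < N)%N ->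
  Ham N m alpha (fun b => if b == inr (k0, j0) then 1 else 0) = if j0 == 1%N then 1 else 0.
Proof.
move=> hm hk; have N0 : (0 < N)%N by lia.
rewrite /Ham /dd /cc hm /=.
rewrite [X in _ * X + _ = _]big1 ?mulr0 ?add0r //.
rewrite (@reindex _ _ (fun k => if inr (k, 1%N) == inr (k0, j0) :> Coord then 1 else 0)) //.
case: eqP => [->|hj].
  rewrite (@pick _ _ _ k0) /= ?eqxx ?mem_iota ?iota_uniq //.
  by move=> b _ nb; case: eqP => // -[ebk]; rewrite ebk eqxx in nb.
by rewrite big1 // => k _ /=; case: eqP => // -[_ /esym /hj].
Qed.

Theorem mainTheorem17 (R : realType) (N m : nat) (alpha : R) :
  (1 <= m)%N -> (2 * m + 2 <= N)%N -> alpha != 0 ->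
  forall (x : Coord), x \in coords N m ->
  forall (p : phase R),
    rhs N m alpha x p = pbr N m alpha (Ham N m alpha) (coordfun x) p.
Proof.
move=> hm hN ha x hx p.
have N0 : (0 < N)%N by lia.
rewrite /pbr.
have PH a : partial a (Ham N m alpha) p = Ham N m alpha (fun b => if b == a then 1 else 0).
  by apply: partial_lin => t; exact: Ham_shift.
have PC b : partial b (coordfun x) p = if x == b then 1 else 0.
  by apply: partial_lin => t; rewrite /coordfun; case: (x == b); rewrite ?mulr1 ?mulr0.
have uc : uniq (coords N m).
  rewrite cat_uniq; apply/and3P; split.
  - by rewrite map_inj_uniq ?iota_uniq // => a b [].
  - by apply/hasP => -[y /allpairsP[[k j] [_ _ ->]] /mapP[k' _]].
  - rewrite allpairs_uniq ?iota_uniq // => [[a1 a2] [b1 b2]] _ _ [-> ->] //.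
rewrite (eq_bigr (fun a => Ham N m alpha (fun b => if b == a then 1 else 0) * br N m alpha a x p)); last first.
  move=> a _; rewrite (@pick _ _ _ x) //; first by rewrite PH PC eqxx mulr1.
  by move=> b _ nb; rewrite PC eq_sym (negbTE nb) mulr0 mul0r.
rewrite /coords big_cat big_map big_allpairs_dep /=.
rewrite (eq_big_seq (fun k => alpha^-1 * br N m alpha (inl k) x p)); last first.
  by move=> k; rewrite mem_iota => /andP[_ hk]; rewrite hval_inl //; lia.
rewrite [X in _ + X](eq_big_seq (fun k => br N m alpha (inr (k, 1%N)) x p)); last first.
  move=> k; rewrite mem_iota => /andP[_ hk].
  rewrite (@pick _ _ _ 1%N) ?mem_iota ?iota_uniq.
  - by rewrite hval_inr // eqxx mul1r.
  - by apply/andP; split; lia.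
  - by [].
  - by move=> j _ nj; rewrite hval_inr // (negbTE nj) mul0r.
clear PH PC; case: x hx => [l|[l j]]; rewrite mem_cat => /orP[].
- move=> /mapP[k]; rewrite mem_iota => /andP[_ hl] [->] {l}.
  rewrite [X in _ = X + _]big1 ?add0r; last by move=> i _; rewrite /= mulr0.
  rewrite /br sumrN /br_dc big_split /=.
  rewrite (@pick _ _ _ k) ?mem_iota ?iota_uniq //; last first.
    move=> b; rewrite mem_iota => /andP[_ hb] nb.
    by rewrite (modn_small hl) (modn_small hb) eq_sym (negbTE nb).
  rewrite (@pick _ _ _ ((k + N - 1) %% N)%N) ?mem_iota ?iota_uniq ?ltn_pmod //; last first.
    move=> b; rewrite mem_iota => /andP[_ hb] nb.
    by rewrite C2 // (negbTE nb).
  rewrite eqxx C2 ?ltn_pmod // eqxx cc_mod /rhs.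
  ring.
- by move=> /allpairsP[[k j] [_ _ ]].
- by move=> /mapP[k _].
- move=> /allpairsP[[k j'] [hk hj /= [-> ->]]] {l j}.
  move: hk hj; rewrite !mem_iota => /andP[_ hl] /andP[hj1 hjm]; rewrite /= in hl hj1 hjm.
  have jN : (j' < N)%N by lia.
  rewrite -mulr_sumr /br_dc big_split /=.
  rewrite (@pick _ _ _ k) ?mem_iota ?iota_uniq //; last first.
    move=> b; rewrite mem_iota => /andP[_ hb] nb.
    by rewrite (modn_small hl) (modn_small hb) (negbTE nb).
  rewrite (@pick _ _ _ ((k + j') %% N)%N) ?mem_iota ?iota_uniq ?ltn_pmod //; last first.
    move=> b; rewrite mem_iota => /andP[_ hb] nb.
    by rewrite (modn_small hb) (negbTE nb).
  rewrite eqxx modn_mod eqxx dd_mod sumrB.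
  rewrite (@pick _ _ _ ((k + N - 1) %% N)%N) ?mem_iota ?iota_uniq ?ltn_pmod //; last first.
    move=> b; rewrite mem_iota => /andP[_ hb] nb.
    by rewrite /fwd_cc G1 F1 // ?(negbTE nb) ?addr0 //; lia.
  rewrite (@pick _ _ _ ((k + j') %% N)%N) ?mem_iota ?iota_uniq ?ltn_pmod //; last first.
    move=> b; rewrite mem_iota => /andP[_ hb] nb.
    by rewrite /fwd_cc G2 F2 // ?(negbTE nb) ?addr0.
  rewrite /fwd_cc G1 G2 F1 ?F2 ?ltn_pmod // ?eqxx ?addr0 ?cc_mod; try lia.
  rewrite add1n addn1 /rhs.
  case: ifP => hj.
    by field.
  have ej : j' = m by lia.
  subst j'.
  have Z a : cc N m p a m.+1 = 0 by rewrite /cc; case: ifP => //; lia.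
  by rewrite !Z; field.
Qed.
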